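(* Let $\Pi$ be an affine PTS with affine invariant $I$, and suppose that the process started at $(\ell_{\mathrm{init}},\mathbf v_{\mathrm{init}})$ terminates almost surely (reaches $\{\ell_t,\ell_f\}$ with probability $1$), where $\ell_{\mathrm{init}}\notin\{\ell_t,\ell_f\}$. Suppose that for every location $\ell\notin\{\ell_t,\ell_f\}$ we are given $\mathbf a_\ell\in\mathbb R^V$, $b_\ell\in\mathbb R$, and set $\mathbf a_{\ell_f}=\mathbf 0$, $b_{\ell_f}=0$, such that: (i) there is $M\in\mathbb R$ with $\mathbf a_\ell\cdot\mathbf v+b_\ell\le M$ for every non-terminal $\ell$ and every $\mathbf v\in I(\ell)$; and (ii) for every transition $\tau=\langle\ell^{\mathrm{src}},\varphi,F_1,\dots,F_k\rangle$ with forks $F_j=\langle\ell^{\mathrm{dst}}_j,p_j,\mathrm{upd}_j\rangle$, $\mathrm{upd}_j(\mathbf v,\mathbf u)=\mathbf Q_j\mathbf v+\mathbf R_j\mathbf u+\mathbf e_j$, letting $J_\tau=\{j:\ell^{\mathrm{dst}}_j\ne\ell_t\}$ and $Q_\tau=\sum_{j\in J_\tau}p_j$, we have $Q_\tau>0$ and, for every $\mathbf v\in I(\ell^{\mathrm{src}})$ with $\mathbf v\models\varphi$, $$Q_\tau^{-1}\sum_{j\in J_\tau}p_j\Big(\mathbf a_{\ell^{\mathrm{dst}}_j}\cdot(\mathbf Q_j\mathbf v+\mathbf R_j\boldsymbol\mu+\mathbf e_j)+b_{\ell^{\mathrm{dst}}_j}-\mathbf a_{\ell^{\mathrm{src}}}\cdot\mathbf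 v-b_{\ell^{\mathrm{src}}}\Big)\ge-\ln Q_\tau,$$ where $\boldsymbol\mu=\mathbb E[\mathbf r]$. Then the function $\theta$ with $\theta(\ell_t,\cdot)=0$, $\theta(\ell_f,\cdot)=1$, $\theta(\ell,\mathbf v)=\exp(\mathbf a_\ell\cdot\mathbf v+b_\ell)$ otherwise is a bounded post fixed point on reachable states, and $\mathrm{vpf}(\ell_{\mathrm{init}},\mathbf v_{\mathrm{init}})\ge\exp(\mathbf a_{\ell_{\mathrm{init}}}\cdot\mathbf v_{\mathrm{init}}+b_{\ell_{\mathrm{init}}})$.
   Context: A probabilistic transition system (PTS) $\Pi$ consists of: a finite set $V$ of program variables (valuations $\mathbf v\in\mathbb R^V$); a finite set $R$ of sampling variables, each $r\in R$ with a probability distribution $\mathcal D(r)$ on $\mathbb R$ with finite mean; $\mathbf r$ denotes the random vector with independent coordinates $\mathbf r[r]\sim\mathcal D(r)$, and $\mathcal U\subseteq\mathbb R^R$ a set with $\Pr[\mathbf r\in\mathcal U]=1$; a finite set $L$ of locations containing an initial location $\ell_{\mathrm{init}}$ and two distinct terminal locations $\ell_t$ (normal termination) and $\ell_f$ (assertion violation); an initial valuation $\mathbf v_{\mathrm{init}}$; and a finite set of transitions $\tau=\langle\ell^{\mathrm{src}},\varphi,F_1,\dots,F_k\rangle$, $\ell^{\mathrm{src}}$ non-terminal, guard $\varphi$, forks $F_j=\langle\ell^{\mathrm{dst}}_j,p_j,\mathrm{upd}_j\rangle$ with $p_j>0$, $\sum_jp_j=1$. For each non-terminal $\ell$ and $\mathbf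 v$ exactly one transition has $\ell^{\mathrm{src}}=\ell$ and $\mathbf v\models\varphi$ (the enabled one). The process: from the current state $(\ell,\mathbf v)$ with $\ell$ non-terminal, take the enabled transition, choose fork $j$ with probability $p_j$, draw a fresh independent copy $\mathbf u$ of $\mathbf r$, move to $(\ell^{\mathrm{dst}}_j,\mathrm{upd}_j(\mathbf v,\mathbf u))$; terminal locations are absorbing. $\mathrm{vpf}(\ell,\mathbf v)$ is the probability of ever reaching $\ell_f$ from $(\ell,\mathbf v)$. $\Pi$ is affine if every guard is a conjunction of affine inequalities in the program variables and every update has the form $\mathrm{upd}(\mathbf v,\mathbf u)=\mathbf Q\mathbf v+\mathbf R\mathbf u+\mathbf e$ with constant matrices $\mathbf Q,\mathbf R$ and constant vector $\mathbf e$. $\mathrm{Reach}$ is the smallest set of states containing $(\ell_{\mathrm{init}},\mathbf v_{\mathrm{init}})$ and closed under taking successors $(\ell^{\mathrm{dst}}_j,\mathrm{upd}_j(\mathbf v,\mathbf u))$ with $\mathbf u\in\mathcal U$ along enabled transitions. An invariant $I$ maps each location $\ell$ to $I(\ell)\subseteq\mathbb R^V$ with $\mathbf v\in I(\ell)$ whenever $(\ell,\mathbf v)\in\mathrm{Reach}$; it is affine if each $I(\ell)$ is a conjunction of affine inequalities. $\mathsf{ptf}$ maps $f$ (with $f(\ell_t,\cdot)=0$, $f(\ell_f,\cdot)=1$) to $\mathsf{ptf}(f)(\ell_f,\mathbf v)=1$, $\mathsf{ptf}(f)(\ell_t,\mathbf v)=0$, and for non-terminal $\ell$, $\mathsf{ptf}(f)(\ell,\mathbf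 v)=\sum_jp_j\mathbb E_{\mathbf r}[f(\ell^{\mathrm{dst}}_j,\mathrm{upd}_j(\mathbf v,\mathbf r))]$ for the enabled transition; a post fixed point on reachable states is $f$ with $f(\sigma)\le\mathsf{ptf}(f)(\sigma)$ for all $\sigma\in\mathrm{Reach}$. *)

(* Defs.v *)
From HB Require Import structures.
From mathcomp Require Import all_boot all_order all_algebra.
From mathcomp Require Import all_classical all_reals all_analysis.
From Stdlib Require List.
Set Implicit Arguments. Unset Strict Implicit. Unset Printing Implicit Defensive.
Import Order.TTheory GRing.Theory Num.Theory.
Local Open Scope ring_scope.
Local Open Scope classical_set_scope.

Definition dotv (R : realType) (n : nat) (a v : 'cV[R]_n) : R :=
  \sum_(i < n) a i 0 * v i 0.

Record ineq (R : realType) (nV : nat) := Ineq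
  { i_c : 'cV[R]_nV; i_d : R; i_strict : bool }.

Definition sat (R : realType) (nV : nat) (g : seq (ineq R nV)) (v : 'cV[R]_nV)
  : bool :=
  all (fun c => if i_strict c then dotv (i_c c) v < i_d c
                else dotv (i_c c) v <= i_d c) g.

Record fork (R : realType) (L : Type) (nV nR : nat) := Fork
  { f_dst : L; f_prob : R;
    f_Q : 'M[R]_nV; f_R : 'M[R]_(nV, nR); f_e : 'cV[R]_nV }.

Definition upd (R : realType) (L : Type) (nV nR : nat) (F : fork R L nV nR)
  (v : 'cV[R]_nV) (u : 'cV[R]_nR) : 'cV[R]_nV :=
  f_Q F *m v + f_R F *m u + f_e F.

Record transition (R : realType) (L : Type) (nV nR : nat) := Trans
  { t_src : L; t_guard : seq (ineq R nV); t_forks : seq (fork R L nV nR) }.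

(* an affine PTS (locations are the finType L, program variables 'I_nV,
   sampling variables 'I_nR) *)
Record apts (R : realType) (L : Type) (nV nR : nat) := APTS
  { l_init : L; l_t : L; l_f : L; v_init : 'cV[R]_nV;
    trans : seq (transition R L nV nR) }.

Definition nonterm (R : realType) (L : eqType) (nV nR : nat)
  (Pi : apts R L nV nR) (l : L) : bool :=
  (l != l_t Pi) && (l != l_f Pi).

Definition enabled_list (R : realType) (L : eqType) (nV nR : nat)
  (Pi : apts R L nV nR) (l : L) (v : 'cV[R]_nV) :=
  seq.filter (fun tau => (t_src tau == l) && sat (t_guard tau) v) (trans Pi).

Definition enabled (R : realType) (L : eqType) (nV nR : nat)
  (Pi : apts R L nV nR) (l : L) (v : 'cV[R]_nV) :=
  ohead (enabled_list Pi l v).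

Definition wf_apts (R : realType) (L : eqType) (nV nR : nat)
  (Pi : apts R L nV nR) : Prop :=
  l_t Pi != l_f Pi /\
  (forall tau, List.In tau (trans Pi) ->
     nonterm Pi (t_src tau) /\
     (0 < size (t_forks tau))%N /\
     (forall F, List.In F (t_forks tau) -> 0 < f_prob F) /\
     \sum_(F <- t_forks tau) f_prob F = 1) /\
  (forall l v, nonterm Pi l -> size (enabled_list Pi l v) = 1%N).

(* The random vector r is given by nR real random variables rv i on a
   probability space (Omega, P), mutually independent, each with finite
   mean; its law is the product of the distributions D(r). *)

Definition mutually_independent (d : measure_display) (T : measurableType d)
  (R : realType) (P : probability T R) (n : nat) (X : 'I_n -> T -> R) : Prop :=
  forall A : 'I_n -> set R, (forall i, measurable (A i)) ->
    P (\bigcap_(i in [set: 'I_n]) (X i @^-1` A i)) =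
    (\prod_(i < n) P (X i @^-1` A i))%E.

Definition sampling_ok (d : measure_display) (T : measurableType d)
  (R : realType) (P : probability T R) (n : nat) (X : 'I_n -> T -> R) : Prop :=
  (forall i, measurable_fun [set: T] (X i)) /\
  (forall i, P.-integrable [set: T] (EFin \o X i)) /\
  mutually_independent P X.

Definition rvec (T : Type) (R : realType) (n : nat) (X : 'I_n -> T -> R)
  (w : T) : 'cV[R]_n := \col_i X i w.

Definition mean_vec (d : measure_display) (T : measurableType d)
  (R : realType) (P : probability T R) (n : nat) (X : 'I_n -> T -> R)
  : 'cV[R]_n := \col_i fine ('E_P[X i])%E.

Definition step (R : realType) (L : eqType) (nV nR : nat)
  (Pi : apts R L nV nR) (d : measure_display) (T : measurableType d)
  (P : probability T R) (X : 'I_nR -> T -> R) (ct cf : \bar R)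
  (f : L -> 'cV[R]_nV -> \bar R) (l : L) (v : 'cV[R]_nV) : \bar R :=
  if l == l_f Pi then cf else if l == l_t Pi then ct else
  match enabled Pi l v with
  | Some tau => (\sum_(F <- t_forks tau)
                   (f_prob F)%:E * \int[P]_w f (f_dst F) (upd F v (rvec X w)))%E
  | None => 0%E
  end.

Definition ptf (R : realType) (L : eqType) (nV nR : nat)
  (Pi : apts R L nV nR) (d : measure_display) (T : measurableType d)
  (P : probability T R) (X : 'I_nR -> T -> R) :=
  step Pi P X 0%E 1%E.

Fixpoint reach_f_within (R : realType) (L : eqType) (nV nR : nat)
  (Pi : apts R L nV nR) (d : measure_display) (T : measurableType d)
  (P : probability T R) (X : 'I_nR -> T -> R) (n : nat)
  : L -> 'cV[R]_nV -> \bar R :=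
  match n with
  | 0 => fun l _ => if l == l_f Pi then 1%E else 0%E
  | n.+1 => ptf Pi P X (reach_f_within Pi P X n)
  end.

Fixpoint term_within (R : realType) (L : eqType) (nV nR : nat)
  (Pi : apts R L nV nR) (d : measure_display) (T : measurableType d)
  (P : probability T R) (X : 'I_nR -> T -> R) (n : nat)
  : L -> 'cV[R]_nV -> \bar R :=
  match n with
  | 0 => fun l _ => if (l == l_f Pi) || (l == l_t Pi) then 1%E else 0%E
  | n.+1 => step Pi P X 1%E 1%E (term_within Pi P X n)
  end.

(* vpf(l, v): probability of ever reaching l_f  (limit = sup over n) *)
Definition vpf (R : realType) (L : eqType) (nV nR : nat)
  (Pi : apts R L nV nR) (d : measure_display) (T : measurableType d)
  (P : probability T R) (X : 'I_nR -> T -> R) (l : L) (v : 'cV[R]_nV)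
  : \bar R :=
  ereal_sup [set reach_f_within Pi P X n l v | n in [set: nat]].

Definition term_prob (R : realType) (L : eqType) (nV nR : nat)
  (Pi : apts R L nV nR) (d : measure_display) (T : measurableType d)
  (P : probability T R) (X : 'I_nR -> T -> R) (l : L) (v : 'cV[R]_nV)
  : \bar R :=
  ereal_sup [set term_within Pi P X n l v | n in [set: nat]].

Inductive Reach (R : realType) (L : eqType) (nV nR : nat)
  (Pi : apts R L nV nR) (U : set 'cV[R]_nR) : L -> 'cV[R]_nV -> Prop :=
| Reach_init : Reach Pi U (l_init Pi) (v_init Pi)
| Reach_step : forall l v tau F u,
    Reach Pi U l v -> nonterm Pi l -> enabled Pi l v = Some tau ->
    List.In F (t_forks tau) -> U u ->
    Reach Pi U (f_dst F) (upd F v u).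

Definition is_invariant (R : realType) (L : eqType) (nV nR : nat)
  (Pi : apts R L nV nR) (U : set 'cV[R]_nR) (I : L -> seq (ineq R nV)) : Prop :=
  forall l v, Reach Pi U l v -> sat (I l) v.

Definition theta (R : realType) (L : eqType) (nV nR : nat)
  (Pi : apts R L nV nR) (a : L -> 'cV[R]_nV) (b : L -> R)
  (l : L) (v : 'cV[R]_nV) : \bar R :=
  if l == l_t Pi then 0%E else if l == l_f Pi then 1%E
  else (expR (dotv (a l) v + b l))%:E.

(* Main.v *)
Require Import Defs.
From HB Require Import structures.
From mathcomp Require Import all_boot all_order all_algebra.
From mathcomp Require Import all_classical all_reals all_analysis.
From mathcomp Require Import measurable_realfun.
From mathcomp Require Import ring lra.
From Stdlib Require List.
Import Order.TTheory GRing.Theory Num.Theory.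
Import numFieldNormedType.Exports.
Local Open Scope ring_scope.
Local Open Scope classical_set_scope.
Section lower.
Local Open Scope ereal_scope.
Context d (T : measurableType d) (R : realType) (P : probability T R).
Import HBNNSimple.

Lemma int_mono (f g : T -> \bar R) : (forall x, 0 <= f x) -> (forall x, f x <= g x) ->
  \int[P]_x f x <= \int[P]_x g x.
Proof.
move=> f0 fg.
have g0 : forall x, 0 <= g x by move=> x; exact: le_trans (f0 x) (fg x).
rewrite !ge0_integralTE//.
apply: ereal_sup_le => _ [h hf <-]; exists h => // x; exact: le_trans (hf x) (fg x).
Qed.

Lemma int_mono_ae (f g : T -> \bar R) (G : set T) : measurable G -> P G = 1 ->
  (forall x, 0 <= f x) -> (forall x, 0 <= g x) -> (forall x, G x -> f x <= g x) ->
  \int[P]_x f x <= \int[P]_x g x.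
Proof.
move=> mG PG f0 g0 fg.
rewrite [X in X <= _]ge0_integralTE//.
apply: ge_ereal_sup => _ [h hf <-].
pose h' := mul_nnsfun h (indic_nnsfun R mG).
have -> : sintegral P h = sintegral P h'.
  rewrite -!integralT_nnsfun; apply: ae_eq_integral => //.
  - apply/measurable_EFinP; exact: measurable_funPT.
  - apply/measurable_EFinP; exact: measurable_funPT.
  - exists (~` G); split.
    + exact: measurableC.
    + by have := probability_setC P mG; rewrite PG subee// => <-.
    + move=> x /= hx Gx; apply: hx => _.
      by rewrite mindicE mem_set//= mulr1.
rewrite -integralT_nnsfun; apply: int_mono => [x|x]; first by rewrite lee_fin.
rewrite /h' /= mindicE; case: (pselect (G x)) => Gx.
  by rewrite mem_set//= mulr1n mulr1; apply: le_trans (hf x) (fg x Gx).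
by rewrite memNset//= mulr0.
Qed.

End lower.
Section lower2.
Local Open Scope ereal_scope.
Context d (T : measurableType d) (R : realType) (P : probability T R).
Import HBNNSimple.

Lemma Pm_setT : (P : {measure set T -> \bar R}) setT = 1.
Proof. exact: probability_setT. Qed.

Lemma int_addc (f : T -> \bar R) (c : R) : (forall x, 0 <= f x) -> (0 <= c)%R ->
  \int[P]_x (f x + c%:E) <= \int[P]_x f x + c%:E.
Proof.
move=> f0 c0.
rewrite [X in X <= _]ge0_integralTE; last by move=> x; rewrite adde_ge0.
apply: ge_ereal_sup => _ [h hf <-].
pose K := fun x => maxe ((h x)%:E - c%:E) 0.
have K0 : forall x, 0 <= K x by move=> x; rewrite /K le_max lexx orbT.
have mK : measurable_fun setT K.
  apply: measurable_maxe => //; apply: emeasurable_funB => //.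
  apply/measurable_EFinP; exact: measurable_funPT.
rewrite -integralT_nnsfun.
apply: (@le_trans _ _ (\int[P]_x (K x + c%:E))).
  apply: ge0_le_integral => //.
  - move=> x _; rewrite lee_fin; exact: fun_ge0.
  - apply/measurable_EFinP; exact: measurable_funPT.
  - exact: emeasurable_funD.
  - move=> x _; rewrite -leeBlDr// /K le_max; apply/orP; left; exact: lexx.
have c0' : 0 <= c%:E by rewrite lee_fin.
rewrite (@ge0_integralD _ _ _ P setT measurableT K (fun=> c%:E) (fun x _ => K0 x) mK (fun x _ => c0') (measurable_cst _)).
have -> : \int[P]_x (c%:E) = c%:E.
  by rewrite (integral_cst P measurableT c%:E) Pm_setT mule1.
apply: leeD2r; apply: int_mono => // x.
rewrite /K ge_max f0 andbT leeBlDr//; exact: hf.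
Qed.

Lemma int_superadd (A B : T -> \bar R) (k : R) :
  measurable_fun setT A -> (forall x, 0 <= A x) -> (forall x, 0 <= B x) -> (0 <= k)%R ->
  \int[P]_x A x + k%:E * \int[P]_x B x <= \int[P]_x (A x + k%:E * B x).
Proof.
move=> mA A0 B0 k0.
have AB0 : forall x, 0 <= A x + k%:E * B x by move=> x; rewrite adde_ge0// mule_ge0.
have hA : \int[P]_x A x <= \int[P]_x (A x + k%:E * B x).
  apply: int_mono => // x; rewrite leeDl// mule_ge0//.
have iA0 : 0 <= \int[P]_x A x by apply: integral_ge0.
have [hfin|hinf] : (\int[P]_x A x) \is a fin_num \/ \int[P]_x A x = +oo.
  by move: iA0; case: (\int[P]_x A x) => [r _|_|//]; [left|right].
  2: by rewrite hinf in hA; move: hA; rewrite leye_eq => /eqP ->; rewrite leey.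
rewrite addeC -leeBrDr//.
rewrite [X in k%:E * X]ge0_integralTE// -ereal_supZl//; last first.
  by apply/set0P; exists (sintegral P nnsfun0); exists nnsfun0 => // x; exact: B0.
apply: ge_ereal_sup => _ [_ [h hB <-] <-].
rewrite leeBrDr//.
pose kh := scale_nnsfun h k0.
have E : \int[P]_x ((k * h x)%:E) = sintegral P kh := integralT_nnsfun P kh.
apply: (@le_trans _ _ (\int[P]_x ((k * h x)%:E) + \int[P]_x A x)).
  rewrite E; apply: leeD2r; rewrite -sintegralrM; rewrite le_eqVlt; apply/orP; left; apply/eqP; reflexivity.
have mkh : measurable_fun setT (fun x => (k * h x)%:E).
  apply/measurable_EFinP; apply: measurable_funM => //; exact: measurable_funPT.
rewrite -ge0_integralD//; last by move=> x _; rewrite lee_fin mulr_ge0.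
apply: int_mono => [x|x]; first by rewrite adde_ge0// lee_fin mulr_ge0.
rewrite addeC leeD2l// EFinM; apply: lee_wpmul2l; [by rewrite lee_fin | exact: hB].
Qed.

Lemma int_key (A B C : T -> \bar R) (k c : R) (G : set T) :
  measurable G -> P G = 1 -> measurable_fun setT A ->
  (forall x, 0 <= A x) -> (forall x, 0 <= B x) -> (forall x, 0 <= C x) ->
  (0 <= k)%R -> (0 <= c)%R ->
  (forall x, G x -> A x + k%:E * B x <= C x + c%:E) ->
  \int[P]_x A x + k%:E * \int[P]_x B x <= \int[P]_x C x + c%:E.
Proof.
move=> mG PG mA A0 B0 C0 k0 c0 H.
apply: le_trans (@int_superadd A B k mA A0 B0 k0) _.
apply: le_trans _ (@int_addc C c C0 c0).
apply: (@int_mono_ae _ _ _ P _ _ G mG PG) => // x.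
  by rewrite adde_ge0// mule_ge0.
by rewrite adde_ge0// lee_fin.
Qed.
End lower2.
Section jensen.
Local Open Scope ring_scope.
Context d (T : measurableType d) (R : realType) (P : probability T R).
Context (I : Type) (X : I -> T -> R).
Hypothesis XL : forall i, X i \in Lfun P 1.

Lemma EX_fin i : ('E_P[X i] = (fine 'E_P[X i])%:E)%E.
Proof. by rewrite fineK// expectation_fin_num. Qed.

Lemma eaff (c0 : R) (k : I -> R) (s : seq I) :
  (fun w => c0 + \sum_(j <- s) k j * X j w) \in Lfun P 1 /\
  ('E_P[fun w => (c0 + \sum_(j <- s) k j * X j w)%R] =
     (c0 + \sum_(j <- s) k j * fine 'E_P[X j])%:E)%E.
Proof.
elim: s => [|j s [IH1 IH2]].
  have -> : (fun w => c0 + \sum_(j <- [::]) k j * X j w) = cst c0.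
    by apply/funext => w; rewrite big_nil addr0.
  by rewrite big_nil addr0 expectation_cst; split => //; exact: Lfun_cst.
have -> : (fun w => c0 + \sum_(i <- j :: s) k i * X i w) =
   ((k j \o* X j) \+ (fun w => c0 + \sum_(i <- s) k i * X i w)).
  by apply/funext => w; rewrite big_cons /= [X j w * k j]mulrC addrCA.
have hj : (k j \o* X j) \in Lfun P 1 by apply: (@Lfun_scale _ _ _ P _ _ 1) => //.
split; first by rewrite -fctD; apply: rpredD.
rewrite expectationD// expectationZl// IH2 EX_fin big_cons -EFinM -EFinD.
by congr EFin; rewrite addrCA.
Qed.

Lemma jensen_exp (c0 : R) (k : I -> R) (s : seq I) :
  ((expR (c0 + \sum_(j <- s) k j * fine 'E_P[X j]))%:E <=
  \int[P]_w (expR (c0 + \sum_(j <- s) k j * X j w))%:E)%E.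
Proof.
set m := (c0 + \sum_(j <- s) k j * fine 'E_P[X j]).
pose phi := (fun w => (expR m * (1 - m + c0)) + \sum_(j <- s) (expR m * k j) * X j w).
have [_ Ephi] := eaff (expR m * (1 - m + c0)) (fun j => expR m * k j) s.
have Ephi' : ('E_P[phi] = (expR m)%:E)%E.
  rewrite /phi Ephi; congr EFin.
  under eq_bigr do rewrite -mulrA.
  rewrite -mulr_sumr -mulrDr -[RHS]mulr1; congr (_ * _); rewrite /m; lra.
have phile : forall w, (phi w <= expR (c0 + \sum_(j <- s) k j * X j w)).
  move=> w.
  have -> : phi w = (expR m * (1 + ((c0 + \sum_(j <- s) k j * X j w) - m))).
    rewrite /phi; under eq_bigr do rewrite -mulrA.
    rewrite -mulr_sumr -mulrDr; congr (_ * _); lra.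
  set Y := c0 + _.
  have := expR_ge1Dx (Y - m); rewrite -(ler_pM2l (expR_gt0 m)) -expRD [m + _]addrC subrK.
  by [].
rewrite -Ephi' unlock.
rewrite integralE.
apply: (@le_trans _ _ (\int[P]_w ((EFin \o phi)^\+ w))%E).
  rewrite -[X in (_ <= X)%E]sube0; apply: leeB => //.
  by apply: integral_ge0 => x _; exact: funeneg_ge0.
apply: int_mono => w; first exact: funepos_ge0.
by rewrite funeposE ge_max !lee_fin expR_ge0 andbT; exact: phile.
Qed.

End jensen.
Section seqIn.
Context (R : realType) (A : Type).
Local Open Scope ring_scope.

Lemma In_filter (p : pred A) x s : List.In x (seq.filter p s) -> List.In x s /\ p x.
Proof.
elim: s => [//|y s IH] /=; case: ifP => py /=.
  by case=> [<-|/IH [? ?]]; [split; [left|]|split; [right|]].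
by move/IH => [? ?]; split; [right|].
Qed.

Lemma lee_sum_In (s : seq A) (f g : A -> \bar R) :
  (forall F, List.In F s -> (f F <= g F)%E) ->
  (\sum_(F <- s) f F <= \sum_(F <- s) g F)%E.
Proof.
elim: s => [|F s IH] H; first by rewrite !big_nil.
rewrite !big_cons; apply: leeD; first by apply: H; left.
by apply: IH => G HG; apply: H; right.
Qed.

Lemma ler_sum_In (s : seq A) (Pr : pred A) (f g : A -> R) :
  (forall F, List.In F s -> Pr F -> f F <= g F) ->
  \sum_(F <- s | Pr F) f F <= \sum_(F <- s | Pr F) g F.
Proof.
elim: s => [|F s IH] H; first by rewrite !big_nil.
rewrite !big_cons; case: ifP => hP.
  by apply: lerD; [apply: H => //; left | apply: IH => G HG; apply: H; right].
by apply: IH => G HG; apply: H; right.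
Qed.

Lemma sume_ge0_In (s : seq A) (f : A -> \bar R) :
  (forall F, List.In F s -> (0 <= f F)%E) -> (0 <= \sum_(F <- s) f F)%E.
Proof.
elim: s => [|F s IH] H; first by rewrite big_nil.
rewrite big_cons adde_ge0//; first by apply: H; left.
by apply: IH => G HG; apply: H; right.
Qed.

Lemma sumeM_In (s : seq A) (c : R) (f : A -> \bar R) :
  (forall F, List.In F s -> (0 <= f F)%E) ->
  (c%:E * \sum_(F <- s) f F = \sum_(F <- s) (c%:E * f F))%E.
Proof.
elim: s => [|F s IH] H; first by rewrite !big_nil mule0.
have H' : forall G, List.In G s -> (0 <= f G)%E by move=> G HG; apply: H; right.
rewrite !big_cons ge0_muleDr ?IH//; first by apply: H; left.
exact: sume_ge0_In.
Qed.

Lemma sum_mkcondE (s : seq A) (Pr : pred A) (f : A -> R) :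
  (\sum_(F <- s) (if Pr F then f F else 0)%:E = (\sum_(F <- s | Pr F) f F)%:E)%E.
Proof.
by rewrite sumEFin; congr EFin; rewrite [RHS]big_mkcond.
Qed.

Lemma amgm (s : seq A) (Pr : pred A) (p x : A -> R) (z : R) :
  (forall F, List.In F s -> 0 <= p F) ->
  0 < \sum_(F <- s | Pr F) p F ->
  - ln (\sum_(F <- s | Pr F) p F) <=
    (\sum_(F <- s | Pr F) p F)^-1 * \sum_(F <- s | Pr F) p F * (x F - z) ->
  expR z <= \sum_(F <- s | Pr F) p F * expR (x F).
Proof.
set Q := \sum_(F <- s | Pr F) p F => p0 Q0.
set S := \sum_(F <- s | Pr F) p F * (x F - z).
set m := Q^-1 * S => hm.
have QS : Q * m = S by rewrite /m mulrA mulfV ?gt_eqF// mul1r.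
have h1 : \sum_(F <- s | Pr F) p F * (expR m * (1 + (x F - z) - m)) <=
          \sum_(F <- s | Pr F) p F * expR (x F - z).
  apply: ler_sum_In => F HF _; apply: ler_wpM2l; first exact: p0.
  have := ler_wpM2l (expR_ge0 m) (expR_ge1Dx (x F - z - m)).
  by rewrite -expRD [m + _]addrC subrK addrA.
have h2 : \sum_(F <- s | Pr F) p F * (expR m * (1 + (x F - z) - m)) = expR m * Q.
  have -> : \sum_(F <- s | Pr F) p F * (expR m * (1 + (x F - z) - m)) =
     \sum_(F <- s | Pr F) (expR m * (1 - m) * p F + expR m * (p F * (x F - z))).
    by apply: eq_bigr => F _; ring.
  rewrite big_split /= -!mulr_sumr -/Q -/S -QS; ring.
have h3 : 1 <= expR m * Q.
  have : Q^-1 <= expR m.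
    by rewrite -(lnK (x:=Q)) ?posrE// -expRN ler_expR.
  by move=> H; have := ler_wpM2r (ltW Q0) H; rewrite mulVf ?gt_eqF.
have -> : \sum_(F <- s | Pr F) p F * expR (x F) =
  expR z * \sum_(F <- s | Pr F) p F * expR (x F - z).
  rewrite mulr_sumr; apply: eq_bigr => F _.
  by rewrite mulrCA -expRD addrC subrK.
rewrite -[X in X <= _]mulr1 ler_wpM2l ?expR_ge0//.
by apply: le_trans h3 _; rewrite -h2.
Qed.

End seqIn.
Section main.
Local Open Scope ring_scope.
Variables (R : realType) (L : finType) (nV nR : nat) (Pi : apts R L nV nR)
  (d : measure_display) (T : measurableType d) (P : probability T R)
  (X : 'I_nR -> T -> R) (U : set 'cV[R]_nR)
  (I : L -> seq (ineq R nV)) (a : L -> 'cV[R]_nV) (b : L -> R).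
Hypothesis wf : wf_apts Pi.
Hypothesis samp : sampling_ok P X.
Hypothesis mU : measurable (rvec X @^-1` U).
Hypothesis PU : P (rvec X @^-1` U) = 1%E.
Hypothesis inv : is_invariant Pi U I.
Hypothesis af : a (l_f Pi) = 0.
Hypothesis bf : b (l_f Pi) = 0.
Variable M : R.
Hypothesis HM : forall l v, nonterm Pi l -> sat (I l) v -> dotv (a l) v + b l <= M.
Hypothesis Htau : forall tau, List.In tau (trans Pi) ->
     let Qt := \sum_(F <- t_forks tau | f_dst F != l_t Pi) f_prob F in
     0 < Qt /\
     forall v, sat (I (t_src tau)) v -> sat (t_guard tau) v ->
       Qt^-1 * \sum_(F <- t_forks tau | f_dst F != l_t Pi)
           f_prob F * (dotv (a (f_dst F))
                          (f_Q F *m v + f_R F *m mean_vec P X + f_e F)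
                       + b (f_dst F) - dotv (a (t_src tau)) v - b (t_src tau))
       >= - ln Qt.

Local Notation th := (theta Pi a b).

Lemma ltf : l_t Pi != l_f Pi. Proof. by case: wf. Qed.

Lemma dotvD n (al y z : 'cV[R]_n) : dotv al (y + z) = dotv al y + dotv al z.
Proof. by rewrite /dotv -big_split; apply: eq_bigr => i _; rewrite mxE mulrDr. Qed.

Lemma dotv0 n (x : 'cV[R]_n) : dotv 0 x = 0.
Proof. by rewrite /dotv big1 // => i _; rewrite mxE mul0r. Qed.

Lemma dotv_mul n m (al : 'cV[R]_n) (Rm : 'M[R]_(n, m)) (x : 'cV[R]_m) :
  dotv al (Rm *m x) = \sum_(j < m) (\sum_(i < n) al i 0 * Rm i j) * x j 0.
Proof.
rewrite /dotv; under eq_bigr do rewrite mxE mulr_sumr.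
rewrite exchange_big; apply: eq_bigr => j _; rewrite mulr_suml.
by apply: eq_bigr => i _; rewrite mulrA.
Qed.

Lemma dotv_aff n m (al : 'cV[R]_n) (Q : 'M[R]_n) (Rm : 'M[R]_(n, m))
  (e v : 'cV[R]_n) (x : 'cV[R]_m) (beta : R) :
  dotv al (Q *m v + Rm *m x + e) + beta =
  (dotv al (Q *m v) + dotv al e + beta) +
     \sum_(j < m) (\sum_(i < n) al i 0 * Rm i j) * x j 0.
Proof. rewrite !dotvD (dotv_mul _ _ al Rm x); ring. Qed.

Lemma theta_exp l x : l != l_t Pi -> th l x = (expR (dotv (a l) x + b l))%:E.
Proof.
move=> hl; rewrite /theta (negbTE hl); case: eqP => [->|//].
by rewrite af bf dotv0 addr0 expR0.
Qed.

Lemma theta_ge0 l x : (0 <= th l x)%E.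
Proof.
by rewrite /theta; case: ifP => _ //; case: ifP => _ //; rewrite lee_fin expR_ge0.
Qed.

Lemma enabled_In l v tau : enabled Pi l v = Some tau ->
  List.In tau (trans Pi) /\ t_src tau = l /\ sat (t_guard tau) v.
Proof.
rewrite /enabled; case E : (enabled_list Pi l v) => [//|t s] /= [<-].
have : List.In t (enabled_list Pi l v) by rewrite E; left.
by rewrite /enabled_list => /(@In_filter _ _ t _) [H /andP[/eqP ? ?]].
Qed.

Lemma enabled_ex l v : nonterm Pi l -> exists tau, enabled Pi l v = Some tau.
Proof.
move=> hl; case: wf => _ [_ H]; have := H l v hl.
by rewrite /enabled; case: (enabled_list Pi l v) => [//|t s] _; exists t.
Qed.

Lemma forks_p tau F : List.In tau (trans Pi) -> List.In F (t_forks tau) -> 0 < f_prob F.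
Proof. by case: wf => _ [H _] /H [_ [_ [H2 _]]] /H2. Qed.

Lemma forks_sum tau : List.In tau (trans Pi) -> \sum_(F <- t_forks tau) f_prob F = 1.
Proof. by case: wf => _ [H _] /H [_ [_ [_ ->]]]. Qed.

Lemma XL i : X i \in Lfun P 1.
Proof. by case: samp => _ [H _]; apply/Lfun1_integrable. Qed.

Lemma mX i : measurable_fun setT (X i). Proof. by case: samp. Qed.

Lemma mexp (c : R) (k : 'I_nR -> R) :
  measurable_fun setT (fun w => (expR (c + \sum_(j < nR) k j * X j w))%:E).
Proof.
apply/measurable_EFinP; apply: (@measurableT_comp _ _ _ _ _ _ expR _ (fun w => c + \sum_(j < nR) k j * X j w)); first exact: measurable_expR.
apply: measurable_funD => //; apply: measurable_sum => j.
apply: measurable_funM => //; exact: mX.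
Qed.

Definition kF (F : fork R L nV nR) (j : 'I_nR) :=
  \sum_(i < nV) a (f_dst F) i 0 * f_R F i j.
Definition cF (F : fork R L nV nR) v :=
  dotv (a (f_dst F)) (f_Q F *m v) + dotv (a (f_dst F)) (f_e F) + b (f_dst F).

Lemma expo_r F v w : dotv (a (f_dst F)) (upd F v (rvec X w)) + b (f_dst F) =
  cF F v + \sum_(j < nR) kF F j * X j w.
Proof. by rewrite /upd dotv_aff; congr (_ + _); apply: eq_bigr => j _; rewrite /rvec mxE. Qed.

Lemma expo_m F v :
  dotv (a (f_dst F)) (f_Q F *m v + f_R F *m mean_vec P X + f_e F) + b (f_dst F) =
  cF F v + \sum_(j < nR) kF F j * fine 'E_P[X j].
Proof. by rewrite dotv_aff; congr (_ + _); apply: eq_bigr => j _; rewrite /mean_vec mxE. Qed.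

Lemma int_theta_lb F v : f_dst F != l_t Pi ->
  ((expR (dotv (a (f_dst F)) (f_Q F *m v + f_R F *m mean_vec P X + f_e F)
     + b (f_dst F)))%:E <= \int[P]_w th (f_dst F) (upd F v (rvec X w)))%E.
Proof.
move=> hF; under eq_integral do rewrite theta_exp // expo_r.
rewrite expo_m; exact: (@jensen_exp _ _ _ P _ X XL (cF F v) (kF F) (index_enum _)).
Qed.

Lemma mtheta F v : measurable_fun setT (fun w => th (f_dst F) (upd F v (rvec X w))).
Proof.
case: (eqVneq (f_dst F) (l_t Pi)) => hF.
  have -> : (fun w => th (f_dst F) (upd F v (rvec X w))) = fun=> 0%E.
    by apply/funext => w; rewrite /theta hF eqxx.
  exact: measurable_cst.
under eq_fun do rewrite theta_exp // expo_r.
exact: mexp.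
Qed.

Let Mp := Num.max (expR M) 1.

Lemma Mp_ge1 : 1 <= Mp. Proof. by rewrite /Mp le_max lexx orbT. Qed.
Lemma Mp_gt0 : 0 < Mp. Proof. exact: lt_le_trans ltr01 Mp_ge1. Qed.

Lemma theta_bound l v : Reach Pi U l v -> (th l v <= Mp%:E)%E.
Proof.
move=> hR; rewrite /theta; case: ifP => ht; first by rewrite lee_fin ltW ?Mp_gt0.
case: ifP => hf; first by rewrite lee_fin Mp_ge1.
rewrite lee_fin /Mp le_max; apply/orP; left; rewrite ler_expR.
by apply: HM; [rewrite /nonterm ht hf | exact: inv _ _ hR].
Qed.

Lemma pfp l v : Reach Pi U l v -> (th l v <= ptf Pi P X th l v)%E.
Proof.
move=> hR; rewrite /ptf /step.
case: (eqVneq l (l_f Pi)) => [->|hf].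
  by rewrite /theta eq_sym (negbTE ltf) eqxx.
case: (eqVneq l (l_t Pi)) => [->|ht].
  by rewrite /theta eqxx.
have hnt : nonterm Pi l by rewrite /nonterm ht hf.
idtac.
have [tau Etau] := enabled_ex l v hnt.
have [tin [tsrc tg]] := enabled_In _ _ _ Etau.
rewrite Etau theta_exp //.
have hI : sat (I l) v := inv _ _ hR.
have /= [Q0 Hq] := Htau _ tin.
have := Hq v; rewrite tsrc => /(_ hI tg) Hq'.
apply: (@le_trans _ _ (\sum_(F <- t_forks tau)
   (if f_dst F != l_t Pi then f_prob F *
      expR (dotv (a (f_dst F)) (f_Q F *m v + f_R F *m mean_vec P X + f_e F)
     + b (f_dst F)) else 0)%:E)%E).
  rewrite sum_mkcondE lee_fin; apply: amgm.
  - by move=> F HF; apply: ltW; exact: forks_p _ _ tin HF.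
  - exact: Q0.
  - apply: le_trans Hq' _; rewrite le_eqVlt; apply/orP; left; apply/eqP.
    congr (_ * _); apply: eq_bigr => F _; congr (_ * _); ring.
apply: lee_sum_In => F HF.
have p0 : (0 <= (f_prob F)%:E)%E by rewrite lee_fin ltW// (forks_p _ _ tin HF).
case: ifP => hF.
  by rewrite EFinM; apply: lee_wpmul2l => //; exact: int_theta_lb.
apply: mule_ge0 => //; apply: integral_ge0 => w _; exact: theta_ge0.
Qed.

Local Notation g := (reach_f_within Pi P X).
Local Notation tn := (term_within Pi P X).

Lemma step_ge0 ct cf f : (0 <= ct)%E -> (0 <= cf)%E -> (forall l v, 0 <= f l v)%E ->
  forall l v, (0 <= step Pi P X ct cf f l v)%E.
Proof.
move=> ct0 cf0 f0 l v; rewrite /step; case: ifP => // _; case: ifP => // _.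
case E: (enabled Pi l v) => [tau|//].
have [tin _] := enabled_In _ _ _ E.
apply: sume_ge0_In => F HF; apply: mule_ge0; first by rewrite lee_fin ltW // (forks_p _ _ tin HF).
by apply: integral_ge0 => w _; apply: f0.
Qed.

Lemma g_ge0 n l v : (0 <= g n l v)%E.
Proof.
elim: n l v => [|n IH] l v /=; first by case: ifP.
by apply: step_ge0.
Qed.

Lemma tn_ge0 n l v : (0 <= tn n l v)%E.
Proof.
elim: n l v => [|n IH] l v /=; first by case: ifP.
by apply: step_ge0.
Qed.

Lemma Cn n l v : Reach Pi U l v -> (th l v + Mp%:E * tn n l v <= g n l v + Mp%:E)%E.
Proof.
elim: n l v => [|n IH] l v hR /=.
  case: (eqVneq l (l_f Pi)) => [->|hf] /=.
    by rewrite /theta eq_sym (negbTE ltf) eqxx mule1.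
  case: (eqVneq l (l_t Pi)) => [->|ht] /=.
    by rewrite /theta eqxx mule1.
  by rewrite mule0 adde0 add0e; exact: theta_bound.
rewrite /ptf /step.
case: (eqVneq l (l_f Pi)) => [->|hf] /=.
  by rewrite /theta eq_sym (negbTE ltf) eqxx mule1.
case: (eqVneq l (l_t Pi)) => [->|ht] /=.
  by rewrite /theta eqxx mule1.
have hnt : nonterm Pi l by rewrite /nonterm ht hf.
have [tau Etau] := enabled_ex l v hnt.
have [tin _] := enabled_In _ _ _ Etau.
rewrite Etau.
apply: le_trans (leeD2r _ (pfp _ _ hR)) _.
rewrite /ptf /step (negbTE hf) (negbTE ht) Etau.
rewrite sumeM_In; last first.
  move=> F HF; apply: mule_ge0; first by rewrite lee_fin ltW // (forks_p _ _ tin HF).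
  by apply: integral_ge0 => w _; exact: tn_ge0.
have HMp : Mp%:E = \sum_(F <- t_forks tau) (f_prob F * Mp)%:E.
  by rewrite sumEFin -mulr_suml forks_sum // mul1r.
rewrite [X in (_ <= _ + X)%E]HMp -!big_split /=.
apply: lee_sum_In => F HF.
have p0 : (0 <= f_prob F)%R by rewrite ltW// (forks_p _ _ tin HF).
rewrite muleCA EFinM -ge0_muleDr; last 2 first.
- by apply: integral_ge0 => w _; exact: theta_ge0.
- by apply: mule_ge0; [rewrite lee_fin ltW ?Mp_gt0 | apply: integral_ge0 => w _; exact: tn_ge0].
rewrite -ge0_muleDr; last 2 first.
- by apply: integral_ge0 => w _; exact: g_ge0.
- by rewrite lee_fin ltW ?Mp_gt0.
apply: lee_wpmul2l; first by rewrite lee_fin.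
apply: (@int_key _ _ _ P _ _ _ Mp Mp (rvec X @^-1` U) mU PU (mtheta F v)).
- by move=> w; exact: theta_ge0.
- by move=> w; exact: tn_ge0.
- by move=> w; exact: g_ge0.
- exact: ltW Mp_gt0.
- exact: ltW Mp_gt0.
move=> w Uw; apply: IH.
exact: (Reach_step hR hnt Etau HF Uw).
Qed.

Lemma vpf_lb : term_prob Pi P X (l_init Pi) (v_init Pi) = 1%E -> nonterm Pi (l_init Pi) ->
  ((expR (dotv (a (l_init Pi)) (v_init Pi) + b (l_init Pi)))%:E
     <= vpf Pi P X (l_init Pi) (v_init Pi))%E.
Proof.
move=> Ht hni.
have Cinit := fun n => Cn n _ _ (Reach_init Pi U).
have hit : l_init Pi != l_t Pi by case/andP: hni.
set li := l_init Pi in Cinit Ht hit *; set vi := v_init Pi in Cinit Ht *.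
set E0 := expR (dotv (a li) vi + b li).
apply/lee_addgt0Pr => e e0.
have : ((1 - e / Mp)%:E < term_prob Pi P X li vi)%E.
  by rewrite Ht lte_fin ltrBlDr ltrDl divr_gt0 // Mp_gt0.
case/ereal_sup_gt => _ [n _ <-] hn.
have tle1 : (tn n li vi <= 1)%E by rewrite -Ht; apply: ereal_sup_ubound; exists n.
have gle : (g n li vi <= vpf Pi P X li vi)%E by apply: ereal_sup_ubound; exists n.
have g0 := g_ge0 n li vi.
have := Cinit n; rewrite theta_exp // -/E0.
move: hn tle1 gle g0.
case: (vpf Pi P X li vi) => [V| |]; last first.
- by move=> _ _ gle g0; have := le_trans g0 gle.
- by move=> *; rewrite leey.
case: (g n li vi) => [gr| |] //.
case: (tn n li vi) => [t| |] //.
rewrite !lte_fin !lee_fin => hn tle1 gle g0.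
move=> HC.
have h1 : Mp - e < Mp * t.
  have H := hn; rewrite -(ltr_pM2l Mp_gt0) in H.
  move: H; rewrite mulrBr mulr1 mulrCA mulfV ?gt_eqF ?Mp_gt0// mulr1.
  done.
set u := Mp * t in h1 HC.
lra.
Qed.
End main.
Theorem mainTheorem12 (R : realType) (L : finType) (nV nR : nat)
  (Pi : apts R L nV nR)
  (d : measure_display) (T : measurableType d) (P : probability T R)
  (X : 'I_nR -> T -> R) (U : set 'cV[R]_nR)
  (I : L -> seq (ineq R nV)) (a : L -> 'cV[R]_nV) (b : L -> R) :
  wf_apts Pi ->
  sampling_ok P X ->
  measurable (rvec X @^-1` U) -> P (rvec X @^-1` U) = 1%E ->
  is_invariant Pi U I ->
  nonterm Pi (l_init Pi) ->
  term_prob Pi P X (l_init Pi) (v_init Pi) = 1%E ->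
  a (l_f Pi) = 0 -> b (l_f Pi) = 0 ->
  (exists M : R, forall l v, nonterm Pi l -> sat (I l) v ->
      dotv (a l) v + b l <= M) ->
  (forall tau, List.In tau (trans Pi) ->
     let Qt := \sum_(F <- t_forks tau | f_dst F != l_t Pi) f_prob F in
     0 < Qt /\
     forall v, sat (I (t_src tau)) v -> sat (t_guard tau) v ->
       Qt^-1 * \sum_(F <- t_forks tau | f_dst F != l_t Pi)
           f_prob F * (dotv (a (f_dst F))
                          (f_Q F *m v + f_R F *m mean_vec P X + f_e F)
                       + b (f_dst F) - dotv (a (t_src tau)) v - b (t_src tau))
       >= - ln Qt) ->
  (exists M : R, forall l v, Reach Pi U l v -> (theta Pi a b l v <= M%:E)%E) /\
  (forall l v, Reach Pi U l v ->
     (theta Pi a b l v <= ptf Pi P X (theta Pi a b) l v)%E) /\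
  ((expR (dotv (a (l_init Pi)) (v_init Pi) + b (l_init Pi)))%:E
     <= vpf Pi P X (l_init Pi) (v_init Pi))%E.
Proof.
move=> wf samp mU PU inv hni Ht af bf [M HM] Htau.
split.
  exists (Num.max (expR M) 1) => l v hR.
  exact: (@theta_bound _ _ _ _ _ _ _ _ _ inv _ HM _ _ hR).
split.
  move=> l v hR.
  exact: (@pfp _ _ _ _ _ _ _ _ _ _ _ _ _ wf samp inv af bf Htau _ _ hR).
exact: (@vpf_lb _ _ _ _ _ _ _ _ _ _ _ _ _ wf samp mU PU inv af bf _ HM Htau Ht hni).
Qed.
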